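(* Let $\mathfrak c:(0,1)\to(0,\infty)$ be any function, $\alpha>0$, $n\ge1$, $p_0\in(1/2,1)$ and $0<\epsilon<p_0-1/2$. Consider two two-armed problem instances with Bernoulli arms: in $\mathcal P_1$, arm 1 is $\mathrm{Ber}(p_0)$ and arm 2 is $\mathrm{Ber}(p_0-\epsilon)$; in $\mathcal P_2$ the arms are swapped. For an instance, let $c_i=\mathfrak c(q_i)$ where $q_i$ is the Bernoulli parameter of arm $i$, and define the approx-oracle allocation for the objective $\varphi(c,T)=c/T^\alpha$ as $\tilde T_i^*\coloneqq n\,c_i^{1/\alpha}/(c_1^{1/\alpha}+c_2^{1/\alpha})$, $i=1,2$. Let $\tau\coloneqq|\tilde T_1^*-n/2|$ computed for $\mathcal P_1$ (it has the same value for $\mathcal P_2$). Then for every adaptive allocation scheme $\mathcal A$ with budget $n$, letting $T_1,T_2$ ($T_1+T_2=n$) be the numbers of samples it allocates to the two arms, $$\max_{\mathcal P\in\{\mathcal P_1,\mathcal P_2\}}\ \max_{i\in\{1,2\}}\ \mathbb E_{\mathcal P}\big[|T_i-\tilde T_i^*|\big]\;\ge\;\frac{\big(1-\epsilon\sqrt{n/(1-p_0)}\big)\,\tau}{2},$$ where $\tilde T_i^*$ is the approx-oracle allocation of the instance $\mathcal P$ under which the expectation is taken.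
   Context: An adaptive allocation scheme with budget $n$ is a sequence of rules that, at each round $t=1,\dots,n$, selects an arm $i\in\{1,2\}$ based on $n$ and the history of selected arms and observations up to round $t-1$; the selected arm then produces an independent draw from its distribution. $\mathbb E_{\mathcal P}$ denotes expectation under the probability measure induced by the scheme and instance $\mathcal P$ on the observations. *)

(* Defs.v *)
From Stdlib Require Import Reals Lra List.
Open Scope R_scope.

(* A history is a list of (arm, observation) pairs, most recent first.
   Arm encoding: false = arm 1, true = arm 2.  Observation: Bernoulli outcome. *)
Definition history := list (bool * bool).

Definition scheme := history -> bool.

Definition armParam (q1 q2 : R) (a : bool) : R := if a then q2 else q1.

Fixpoint expectRun (A : scheme) (q1 q2 : R) (k : nat) (h : history)
    (f : history -> R) : R :=
  match k with
  | O => f h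
  | S k' =>
      let a := A h in
      let q := armParam q1 q2 a in
      q * expectRun A q1 q2 k' ((a, true) :: h) f
      + (1 - q) * expectRun A q1 q2 k' ((a, false) :: h) f
  end.

Definition expectation (A : scheme) (q1 q2 : R) (n : nat) (f : history -> R) : R :=
  expectRun A q1 q2 n nil f.

Definition countArm (i : bool) (h : history) : nat :=
  length (filter (fun p => Bool.eqb (fst p) i) h).

Definition approxOracle (alpha : R) (n : nat) (c1 c2 : R) (i : bool) : R :=
  let w1 := Rpower c1 (/ alpha) in
  let w2 := Rpower c2 (/ alpha) in
  INR n * (if i then w2 else w1) / (w1 + w2).

Definition devArm (cf : R -> R) (alpha : R) (n : nat) (A : scheme)
    (q1 q2 : R) (i : bool) : R :=
  expectation A q1 q2 n
    (fun h => Rabs (INR (countArm i h) - approxOracle alpha n (cf q1) (cf q2) i)).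

(* Main.v *)
Require Import Defs.
From Stdlib Require Import Reals Lra Lia List.
Open Scope R_scope.

Fixpoint J (A : scheme) (q1 q2 : R) (k : nat) (h : history) (u v : R)
  (F : history -> R -> R -> R) : R :=
  match k with
  | O => F h u v
  | S k' =>
      J A q1 q2 k' ((A h, true) :: h) (u * armParam q1 q2 (A h)) (v * armParam q2 q1 (A h)) F
    + J A q1 q2 k' ((A h, false) :: h) (u * (1 - armParam q1 q2 (A h)))
        (v * (1 - armParam q2 q1 (A h))) F
  end.

Lemma J_E1 A q1 q2 f : forall k h u v,
  u * expectRun A q1 q2 k h f = J A q1 q2 k h u v (fun h u v => u * f h).
Proof.
  induction k as [|k IH]; intros h u v; simpl; [reflexivity|].
  rewrite <- !IH. ring.
Qed.

Lemma J_E2 A q1 q2 g : forall k h u v,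
  v * expectRun A q2 q1 k h g = J A q1 q2 k h u v (fun h u v => v * g h).
Proof.
  induction k as [|k IH]; intros h u v; simpl; [reflexivity|].
  rewrite <- !IH. ring.
Qed.

Lemma J_add A q1 q2 F G : forall k h u v,
  J A q1 q2 k h u v (fun h u v => F h u v + G h u v)
  = J A q1 q2 k h u v F + J A q1 q2 k h u v G.
Proof.
  induction k as [|k IH]; intros h u v; simpl; [reflexivity|].
  rewrite !IH. ring.
Qed.

Lemma J_scal A q1 q2 c F : forall k h u v,
  J A q1 q2 k h u v (fun h u v => c * F h u v) = c * J A q1 q2 k h u v F.
Proof.
  induction k as [|k IH]; intros h u v; simpl; [reflexivity|].
  rewrite !IH. ring.
Qed.

Lemma J_sum A q1 q2 : forall k h u v,
  J A q1 q2 k h u v (fun _ u v => u + v) = u + v.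
Proof.
  induction k as [|k IH]; intros h u v; simpl; [reflexivity|].
  rewrite !IH. ring.
Qed.

Lemma armB q1 q2 a : 0 <= q1 <= 1 -> 0 <= q2 <= 1 -> 0 <= armParam q1 q2 a <= 1.
Proof. destruct a; simpl; auto. Qed.

Lemma J_mono A q1 q2 F G : 0 <= q1 <= 1 -> 0 <= q2 <= 1 ->
  (forall h u v, 0 <= u -> 0 <= v -> F h u v <= G h u v) ->
  forall k h u v, 0 <= u -> 0 <= v -> J A q1 q2 k h u v F <= J A q1 q2 k h u v G.
Proof.
  intros H1 H2 HFG.
  induction k as [|k IH]; intros h u v hu hv; simpl; [auto|].
  pose proof (armB q1 q2 (A h) H1 H2). pose proof (armB q2 q1 (A h) H2 H1).
  apply Rplus_le_compat; apply IH; nra.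
Qed.

Lemma J_nonneg A q1 q2 F : 0 <= q1 <= 1 -> 0 <= q2 <= 1 ->
  (forall h u v, 0 <= u -> 0 <= v -> 0 <= F h u v) ->
  forall k h u v, 0 <= u -> 0 <= v -> 0 <= J A q1 q2 k h u v F.
Proof.
  intros H1 H2 HF.
  induction k as [|k IH]; intros h u v hu hv; simpl; [auto|].
  pose proof (armB q1 q2 (A h) H1 H2). pose proof (armB q2 q1 (A h) H2 H1).
  apply Rplus_le_le_0_compat; apply IH; nra.
Qed.

Lemma cs2 a1 a2 b1 b2 c1 c2 : 0 <= a1 -> 0 <= a2 -> 0 <= b1 -> 0 <= b2 ->
  0 <= c1 -> 0 <= c2 -> a1^2 <= b1*c1 -> a2^2 <= b2*c2 ->
  (a1+a2)^2 <= (b1+b2)*(c1+c2).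
Proof.
  intros.
  assert (Hp : (a1*a2)^2 <= (b1*c2)*(b2*c1)).
  { replace ((a1*a2)^2) with (a1^2*a2^2) by ring.
    replace ((b1*c2)*(b2*c1)) with ((b1*c1)*(b2*c2)) by ring.
    apply Rmult_le_compat; try nra. }
  assert (Hq : (2*(a1*a2))^2 <= (b1*c2+b2*c1)^2).
  { replace ((2*(a1*a2))^2) with (4*(a1*a2)^2) by ring.
    replace ((b1*c2+b2*c1)^2) with (4*((b1*c2)*(b2*c1)) + (b1*c2-b2*c1)^2) by ring.
    pose proof (pow2_ge_0 (b1*c2-b2*c1)). lra. }
  assert (2*(a1*a2) <= b1*c2+b2*c1).
  { destruct (Rle_dec (2*(a1*a2)) (b1*c2+b2*c1)) as [|Hn]; auto.
    apply Rnot_le_lt in Hn. exfalso.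
    assert (0 <= b1*c2+b2*c1) by nra. nra. }
  replace ((a1+a2)^2) with (a1^2+a2^2+2*(a1*a2)) by ring.
  replace ((b1+b2)*(c1+c2)) with (b1*c1+b2*c2+(b1*c2+b2*c1)) by ring.
  lra.
Qed.

Lemma J_cs A q1 q2 F G H : 0 <= q1 <= 1 -> 0 <= q2 <= 1 ->
  (forall h u v, 0 <= u -> 0 <= v ->
     0 <= F h u v /\ 0 <= G h u v /\ 0 <= H h u v /\ (F h u v)^2 <= G h u v * H h u v) ->
  forall k h u v, 0 <= u -> 0 <= v ->
  (J A q1 q2 k h u v F)^2 <= J A q1 q2 k h u v G * J A q1 q2 k h u v H.
Proof.
  intros H1 H2 HF.
  induction k as [|k IH]; intros h u v hu hv; simpl; [apply HF; auto|].
  pose proof (armB q1 q2 (A h) H1 H2). pose proof (armB q2 q1 (A h) H2 H1).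
  apply cs2; try (apply IH; nra);
   apply J_nonneg; auto; try nra; intros; apply HF; auto.
Qed.

Lemma J_sqrt A q1 q2 : 0 <= q1 <= 1 -> 0 <= q2 <= 1 ->
  forall k h u v, 0 <= u -> 0 <= v ->
  J A q1 q2 k h u v (fun _ u v => sqrt (u*v))
  = sqrt (u*v) * (sqrt (q1*q2) + sqrt ((1-q1)*(1-q2)))^k.
Proof.
  intros H1 H2.
  induction k as [|k IH]; intros h u v hu hv; simpl; [ring|].
  pose proof (armB q1 q2 (A h) H1 H2). pose proof (armB q2 q1 (A h) H2 H1).
  rewrite !IH by nra.
  assert (E1 : u * armParam q1 q2 (A h) * (v * armParam q2 q1 (A h)) = (u*v) * (q1*q2))
    by (destruct (A h); simpl; ring).
  assert (E2 : u * (1 - armParam q1 q2 (A h)) * (v * (1 - armParam q2 q1 (A h)))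
               = (u*v) * ((1-q1)*(1-q2))) by (destruct (A h); simpl; ring).
  rewrite E1, E2, !sqrt_mult; try nra; ring.
Qed.

Lemma bern d : 0 <= d <= 1 -> forall m, (1-d)^m >= 1 - INR m * d.
Proof.
  intros Hd. induction m as [|m IH]; [simpl; lra|].
  rewrite S_INR; simpl.
  assert (0 <= 1 - d) by lra.
  destruct (Rle_dec 0 (1 - INR m * d)).
  - assert ((1-d)*(1-d)^m >= (1-d)*(1-INR m*d)) by (apply Rle_ge, Rmult_le_compat_l; lra).
    pose proof (pos_INR m). nra.
  - pose proof (pow_le (1-d) m H). nra.
Qed.

Lemma rho_bound p0 eps n : 1/2 < p0 < 1 -> 0 < eps < p0 - 1/2 ->
  (sqrt (p0*(p0-eps)) + sqrt ((1-p0)*(1-(p0-eps))))^(2*n)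
  >= 1 - eps * sqrt (INR n / (1-p0)).
Proof.
  intros hp he.
  set (x := eps * sqrt (INR n / (1-p0))).
  set (s := sqrt p0). set (t := sqrt (p0-eps)). set (U := sqrt (1-(p0-eps))).
  set (V := sqrt (1-p0)).
  assert (Hs : s*s = p0) by (apply sqrt_sqrt; lra).
  assert (Ht : t*t = p0-eps) by (apply sqrt_sqrt; lra).
  assert (HU : U*U = 1-(p0-eps)) by (apply sqrt_sqrt; lra).
  assert (HV : V*V = 1-p0) by (apply sqrt_sqrt; lra).
  assert (s0 : 0 <= s) by apply sqrt_pos. assert (t0 : 0 <= t) by apply sqrt_pos.
  assert (U0 : 0 <= U) by apply sqrt_pos. assert (V0 : 0 <= V) by apply sqrt_pos.
  rewrite !sqrt_mult by lra. fold s t U V. rewrite (Rmult_comm V U).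
  set (d := 1 - (s*t + U*V)).
  replace (s*t+U*V) with (1-d) by (unfold d; ring).
  assert (Hd : d = ((s-t)^2 + (U-V)^2)/2) by (unfold d; nra).
  assert (Hst : (s-t)*(s+t) = eps) by nra.
  assert (HUV : (U-V)*(U+V) = eps) by nra.
  assert (B1 : 2*(s-t)^2 <= eps^2).
  { assert (t <= s) by nra. assert ((s+t)^2 >= 2) by nra.
    assert (eps^2 = (s-t)^2*(s+t)^2) by (rewrite <- Hst; ring). nra. }
  assert (B2 : 4*(1-p0)*(U-V)^2 <= eps^2).
  { assert (V <= U) by nra. assert ((U+V)^2 >= 4*(1-p0)) by nra.
    assert (eps^2 = (U-V)^2*(U+V)^2) by (rewrite <- HUV; ring). nra. }
  assert (Bd : 4*(1-p0)*d <= eps^2).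
  { rewrite Hd.
    assert ((1-p0)*(2*(s-t)^2) <= (1-p0)*eps^2) by (apply Rmult_le_compat_l; lra).
    assert (0 <= eps^2) by apply pow2_ge_0.
    replace (4 * (1 - p0) * (((s - t) ^ 2 + (U - V) ^ 2) / 2))
      with ((1-p0)*(2*(s-t)^2) + 4*(1-p0)*(U-V)^2/2) by field.
    assert ((1-p0)*eps^2 <= /2 * eps^2) by (apply Rmult_le_compat_r; lra). lra. }
  assert (d0 : 0 <= d) by (rewrite Hd; pose proof (pow2_ge_0 (s-t)); pose proof (pow2_ge_0 (U-V)); lra).
  assert (H : 0 <= 1 - d).
  { unfold d. assert (0 <= s*t) by (apply Rmult_le_pos; auto).
    assert (0 <= U*V) by (apply Rmult_le_pos; auto). lra. }
  destruct (Rle_dec 1 x).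
  - pose proof (pow_le (1-d) (2*n) H). lra.
  - assert (H1 : d <= 1) by lra. clear H. rename H1 into H.
    pose proof (bern d (conj d0 H) (2*n)).
    rewrite mult_INR in H0. simpl (INR 2) in H0.
    assert (x0 : 0 <= x) by (unfold x; pose proof (sqrt_pos (INR n / (1-p0))); nra).
    assert (Hx2 : x^2 = eps^2 * (INR n / (1-p0))).
    { unfold x. replace ((eps * sqrt (INR n / (1 - p0)))^2)
        with (eps^2 * (sqrt (INR n / (1 - p0)) * sqrt (INR n / (1 - p0)))) by ring.
      rewrite sqrt_sqrt; auto. pose proof (pos_INR n).
      apply Rle_mult_inv_pos; lra. }
    assert (2 * INR n * d <= x^2/2).
    { rewrite Hx2. pose proof (pos_INR n).
      assert (INR n * (4*(1-p0)*d) <= INR n * eps^2) by (apply Rmult_le_compat_l; lra).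
      unfold Rdiv. replace (eps ^ 2 * (INR n * / (1 - p0)) * / 2)
        with (INR n * eps^2 / (2*(1-p0))) by (field; lra).
      apply Rmult_le_reg_r with (2*(1-p0)); [lra|].
      replace (INR n * eps^2 / (2*(1-p0)) * (2*(1-p0))) with (INR n*eps^2) by (field; lra).
      replace (2 * INR n * d * (2 * (1 - p0))) with (INR n * (4 * (1 - p0) * d)) by ring.
      lra. }
    nra.
Qed.

Theorem mainTheorem7 (cf : R -> R)
    (hcf : forall q, 0 < q < 1 -> 0 < cf q)
    (alpha : R) (halpha : 0 < alpha) (n : nat) (hn : (1 <= n)%nat)
    (p0 : R) (hp0 : 1/2 < p0 < 1) (eps : R) (heps : 0 < eps < p0 - 1/2)
    (A : scheme) :
  let tau := Rabs (approxOracle alpha n (cf p0) (cf (p0 - eps)) false - INR n / 2) in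
  Rmax (Rmax (devArm cf alpha n A p0 (p0 - eps) false)
             (devArm cf alpha n A p0 (p0 - eps) true))
       (Rmax (devArm cf alpha n A (p0 - eps) p0 false)
             (devArm cf alpha n A (p0 - eps) p0 true))
  >= (1 - eps * sqrt (INR n / (1 - p0))) * tau / 2.
Proof.
  intros tau.
  set (a := approxOracle alpha n (cf p0) (cf (p0 - eps)) false).
  set (b := approxOracle alpha n (cf (p0 - eps)) (cf p0) false).
  set (f := fun h => Rabs (INR (countArm false h) - a)).
  set (g := fun h => Rabs (INR (countArm false h) - b)).
  set (E1 := devArm cf alpha n A p0 (p0 - eps) false).
  set (E3 := devArm cf alpha n A (p0 - eps) p0 false).
  assert (HE1 : E1 = J A p0 (p0-eps) n nil 1 1 (fun h u v => u * f h)).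
  { rewrite <- J_E1. unfold E1, devArm, expectation. fold a. unfold f. ring. }
  assert (HE3 : E3 = J A p0 (p0-eps) n nil 1 1 (fun h u v => v * g h)).
  { rewrite <- J_E2. unfold E3, devArm, expectation. fold b. unfold g. ring. }
  assert (Hab : Rabs (a - b) = 2 * tau).
  { unfold tau. fold a. unfold a, b, approxOracle.
    set (w1 := Rpower (cf p0) (/ alpha)). set (w2 := Rpower (cf (p0-eps)) (/alpha)).
    assert (0 < w1) by (unfold w1, Rpower; apply exp_pos).
    assert (0 < w2) by (unfold w2, Rpower; apply exp_pos).
    replace (INR n * w1 / (w1 + w2) - INR n * w2 / (w2 + w1))
      with (2 * (INR n * w1 / (w1 + w2) - INR n / 2)) by (field; lra).
    rewrite Rabs_mult, Rabs_right by lra. reflexivity. }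
  assert (tau0 : 0 <= tau) by apply Rabs_pos.
  assert (Hq1 : 0 <= p0 <= 1) by lra. assert (Hq2 : 0 <= p0 - eps <= 1) by lra.
  set (rho := sqrt (p0*(p0-eps)) + sqrt ((1-p0)*(1-(p0-eps)))).
  assert (Hsq : J A p0 (p0-eps) n nil 1 1 (fun _ u v => sqrt (u*v)) = rho^n).
  { rewrite J_sqrt by lra. replace (1*1) with 1 by ring. rewrite sqrt_1. unfold rho. ring. }
  assert (HCS := J_cs A p0 (p0-eps) (fun _ u v => sqrt (u*v)) (fun _ u v => Rmin u v)
                   (fun _ u v => u + v) Hq1 Hq2).
  assert (HCS' : (rho^n)^2 <= J A p0 (p0-eps) n nil 1 1 (fun _ u v => Rmin u v) * 2).
  { rewrite <- Hsq.
    replace (J A p0 (p0-eps) n nil 1 1 (fun _ u v => Rmin u v) * 2) with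
      (J A p0 (p0-eps) n nil 1 1 (fun _ u v => Rmin u v) * J A p0 (p0-eps) n nil 1 1 (fun _ u v => u + v))
      by (rewrite J_sum; ring).
    apply HCS; try lra.
    intros h u v hu hv. cbv beta. split; [apply sqrt_pos|]. split.
    - unfold Rmin; destruct (Rle_dec u v); lra.
    - split; [lra|]. rewrite <- Rsqr_pow2, Rsqr_sqrt by nra.
      unfold Rmin; destruct (Rle_dec u v); nra. }
  assert (Hsum : E1 + E3 >= 2 * tau * J A p0 (p0-eps) n nil 1 1 (fun _ u v => Rmin u v)).
  { rewrite HE1, HE3, <- J_add, <- J_scal. apply Rle_ge.
    apply J_mono; try lra.
    intros h u v hu hv.
    assert (Hfg : 2 * tau <= f h + g h).
    { rewrite <- Hab. unfold f, g.
      replace (a - b) with ((INR (countArm false h) - b) + - (INR (countArm false h) - a))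
        by ring.
      rewrite Rplus_comm. eapply Rle_trans; [apply Rabs_triang|].
      rewrite Rabs_Ropp. lra. }
    assert (0 <= f h) by apply Rabs_pos. assert (0 <= g h) by apply Rabs_pos.
    unfold Rmin; destruct (Rle_dec u v); nra. }
  pose proof (rho_bound p0 eps n hp0 heps) as Hr. fold rho in Hr.
  replace (rho^(2*n)) with ((rho^n)^2) in Hr by (rewrite <- pow_mult; f_equal; lia).
  assert (E1 <= Rmax (Rmax E1 (devArm cf alpha n A p0 (p0 - eps) true))
             (Rmax E3 (devArm cf alpha n A (p0 - eps) p0 true))).
  { eapply Rle_trans; apply Rmax_l. }
  assert (E3 <= Rmax (Rmax E1 (devArm cf alpha n A p0 (p0 - eps) true))
             (Rmax E3 (devArm cf alpha n A (p0 - eps) p0 true))).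
  { eapply Rle_trans; [apply Rmax_l|apply Rmax_r]. }
  assert (tau * (rho^n)^2 >= tau * (1 - eps * sqrt (INR n / (1 - p0)))) by nra.
  nra.
Qed.
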